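(* Let $f(x)=\ln(e-x)$ for $0\le x\le e-1$ and $f(x)=0$ for $x>e-1$. There is a function $\rho(\theta)$ with $\rho(\theta)\to1-1/e$ as $\theta\to0$ such that for every instance with largeness ratio $\theta=c_{\max}/B$, the utility $\sum_iu_if_{r_i}(c_i/u_i)$ obtained by $\mathrm{Truthful}(f)$ (with true costs) is at least $\rho(\theta)U^\star$.
   Context: Setting: a buyer with budget $B>0$ faces a finite set $S$ of sellers; seller $i$ owns one divisible item giving utility $u_i>0$ and has cost $c_i\ge0$; buying fraction $x_i\in[0,1]$ costs $x_ic_i$ and gives utility $x_iu_i$. $U^\star=\max\{\sum_iu_i\alpha_i:\alpha\in[0,1]^S,\sum_ic_i\alpha_i\le B\}$; $c_{\max}=\max_ic_i$. For a non-increasing $f:[0,\infty)\to[0,1]$ with $f(0)=1$, $f(e-1)=0$ and $r>0$: $f_r(x)=f(x/r)$, $Q_r(x)=xf_r(x)+\int_x^\infty f_r(y)\,dy$, $P_{i,r}(x)=u_iQ_r(x/u_i)$. $\mathrm{EnvyFree}(f)$ on cost vector $c$ has stopping rate $r^\star$, the value at which, decreasing $r$ from $\infty$, the nondecreasing function $r\mapsto\sum_iP_{i,r}(c_i)$ first equals $B$. $\mathrm{Truthful}(f)$: for each $i$, $r_i$ is the stopping rate of $\mathrm{EnvyFree}(f)$ on the cost vector obtained from $c$ by setting the $i$-th cost to $0$; it buys $f_{r_i}(c_i/u_i)$ of item $i$ and pays $P_{i,r_i}(c_i)$. *)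

(* Defs.v *)
From HB Require Import structures.
From mathcomp Require Import all_boot all_order all_algebra.
From mathcomp Require Import all_classical all_reals all_analysis.
Set Implicit Arguments. Unset Strict Implicit. Unset Printing Implicit Defensive.
Import Order.TTheory GRing.Theory Num.Theory.
Local Open Scope classical_set_scope.
Local Open Scope ring_scope.

(* The specific f of the statement: f(x) = ln(e - x) for x <= e - 1, 0 beyond.
   (Only evaluated at nonnegative arguments.) *)
Definition fln {R : realType} (x : R) : R :=
  if x <= expR 1 - 1 then ln (expR 1 - x) else 0.

Definition fr {R : realType} (f : R -> R) (r x : R) : R := f (x / r).

Definition Qr {R : realType} (f : R -> R) (r x : R) : R :=
  x * fr f r x + Rintegral (@lebesgue_measure R) `[x, +oo[%classic (fr f r).

Definition Pir {R : realType} (f : R -> R) (ui r x : R) : R := ui * Qr f r (x / ui).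

Definition envy_sum {R : realType} {S : finType} (f : R -> R) (u c : S -> R) (r : R) : R :=
  \sum_(i : S) Pir f (u i) r (c i).

(* Stopping rate of EnvyFree(f) on cost vector c: the first r (decreasing from
   +oo) at which envy_sum equals B, i.e. the largest r > 0 with envy_sum r = B. *)
Definition stopping_rate {R : realType} {S : finType} (f : R -> R) (B : R)
  (u c : S -> R) : R :=
  sup [set r : R | 0 < r /\ envy_sum f u c r = B].

Definition truthful_rate {R : realType} {S : finType} (f : R -> R) (B : R)
  (u c : S -> R) (i : S) : R :=
  stopping_rate f B u (fun j => if j == i then 0 else c j).

Definition truthful_utility {R : realType} {S : finType} (f : R -> R) (B : R)
  (u c : S -> R) : R :=
  \sum_(i : S) u i * fr f (truthful_rate f B u c i) (c i / u i).

Definition Ustar {R : realType} {S : finType} (B : R) (u c : S -> R) : R :=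
  sup [set x : R | exists a : S -> R,
         (forall i, 0 <= a i <= 1) /\ \sum_(i : S) c i * a i <= B /\
         x = \sum_(i : S) u i * a i].

(* c_max = max_i c_i (costs are nonnegative, so 0 is a neutral start) *)
Definition cmax {R : realType} {S : finType} (c : S -> R) : R :=
  \big[Num.max/0]_(i : S) c i.

(* Main.v *)
Require Import Defs.
From HB Require Import structures.
From mathcomp Require Import all_boot all_order all_algebra.
From mathcomp Require Import all_classical all_reals all_analysis.
From mathcomp Require Import ring lra.
Import Order.TTheory GRing.Theory Num.Theory.
Import numFieldNormedType.Exports.
Local Open Scope classical_set_scope.
Local Open Scope ring_scope.

Section S.
Variable R : realType.
Local Notation e := (expR (1:R)).

Lemma is_derive_ext2 (f g : R -> R) x v d d' : is_derive x v f d -> f =1 g -> d = d' -> is_derive x v g d'.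
Proof. by move=> H /funext <- <-. Qed.

Lemma dh (r y : R) : is_derive y 1 (fun z : R => e - z / r) (- r^-1).
Proof.
have h1 : is_derive y 1 (fun z : R => z / r) (r^-1).
  have H := @is_deriveZ R R R id (r^-1) y 1 1 (is_derive_id _ _).
  eapply is_derive_ext2; [exact: H| move=> z /=| ].
  - by rewrite mulrC.
  - by rewrite /GRing.scale/= mulr1.
have H := @is_deriveB R R R (cst e) (fun z : R => z / r) y 1 0 (r^-1) _ h1.
eapply is_derive_ext2; [exact: H| move=> z //| ].
by rewrite sub0r.
Qed.

Definition Gf (r y : R) := (y - r * e) * ln (e - y / r) - y.

Lemma dG (r y : R) : 0 < r -> 0 < e - y / r -> is_derive y 1 (Gf r) (ln (e - y / r)).
Proof.
move=> r0 hy.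
have hl : is_derive y 1 (@ln R \o (fun z : R => e - z / r)) ((e - y / r)^-1 * (- r^-1)).
  apply: is_derive1_comp; last exact: dh.
  exact: is_derive1_ln.
have hf : is_derive y 1 (fun z : R => z - r * e) 1.
  have H := @is_deriveB R R R id (cst (r * e)) y 1 1 0 (is_derive_id _ _) _.
  eapply is_derive_ext2; [exact: H| move=> z //| ].
  by rewrite subr0.
have H := @is_deriveM R R (fun z : R => z - r * e) (@ln R \o (fun z : R => e - z / r)) y 1 _ _ hf hl.
have H2 := @is_deriveB R R R _ id y 1 _ 1 H (is_derive_id _ _).
eapply is_derive_ext2; [exact: H2| move=> z //| ].
rewrite /GRing.scale /= mulr1.
have hy0 : e - y / r != 0 by rewrite gt_eqF.
have -> : (y - r * e) = - r * (e - y / r) by field; rewrite gt_eqF.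
move: hy0; set a := (e - y / r); move: (ln a) => L ha.
have r0' : r != 0 by rewrite gt_eqF.
by field; apply/andP.
Qed.
Arguments dG {r y}.

Local Notation mu := (@lebesgue_measure R).
Definition gl (r y : R) := ln (e - y / r).

Lemma hpos (r y : R) : 0 < r -> y <= r * (e - 1) -> 1 <= e - y / r.
Proof.
move=> r0 yM.
have : y / r <= e - 1.
  rewrite ler_pdivrMr //; by rewrite mulrC.
lra.
Qed.
Arguments hpos {r y}.

Lemma G_cont (r y : R) : 0 < r -> 0 < e - y / r -> {for y, continuous (fun z : R => Gf r z)}.
Proof.
move=> r0 hy; have [dGy _] := dG r0 hy.
by apply/differentiable_continuous; rewrite -derivable1_diffP.
Qed.
Arguments G_cont {r y}.

Lemma gl_cont (r y : R) : 0 < r -> 0 < e - y / r -> {for y, continuous (fun z : R => gl r z)}.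
Proof.
move=> r0 hy.
have [dhy _] := dh r y.
have ch : {for y, continuous (fun z : R => e - z / r)}.
  by apply/differentiable_continuous; rewrite -derivable1_diffP.
apply: (continuous_comp ch).
exact: continuous_ln.
Qed.
Arguments gl_cont {r y}.

Lemma int_gl (r x : R) : 0 < r -> x < r * (e - 1) ->
 (\int[mu]_(y in `[x, (r * (e - 1))%R]) (gl r y)%:E = (Gf r (r * (e - 1))%R)%:E - (Gf r x)%:E)%E.
Proof.
move=> r0 xM.
have pos y : y <= r * (e - 1) -> 0 < e - y / r.
  by move=> /(hpos r0) h; apply: (lt_le_trans _ h).
apply: continuous_FTC2 => //.
- apply: continuous_in_subspaceT => y; rewrite inE /= in_itv /= => /andP[_ yM].
  exact: gl_cont r0 (pos _ yM).
- split.
  + move=> y; rewrite in_itv /= => /andP[_ yM].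
    by have [] := dG r0 (pos _ (ltW yM)).
  + apply: cvg_at_right_filter; exact: G_cont r0 (pos _ (ltW xM)).
  + apply: cvg_at_left_filter; exact: G_cont r0 (pos _ (lexx _)).
- move=> y; rewrite in_itv /= => /andP[_ yM].
  have Hd := dG r0 (pos _ (ltW yM)).
  by rewrite derive1E derive_val.
Qed.

Lemma memi (i : interval R) (y : R) : (y \in [set` i]) = (y \in i).
Proof. by apply/idP/idP; rewrite in_setE. Qed.

Definition q (s : R) := if s <= e - 1 then e * ln (e - s) - e + s + 1 else 0.

Lemma ln_e1 : ln (e - (e - 1)) = 0 :> R.
Proof. by rewrite opprB addrC subrK ln1. Qed.

Lemma Qr_fln (r x : R) : 0 < r -> 0 <= x -> Qr fln r x = r * q (x / r).
Proof.
move=> r0 x0.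
have rn0 : r != 0 by rewrite gt_eqF.
rewrite /Qr /fr /q /fln.
have [xM|Mx] := ltP (x / r) (e - 1).
- have xM' : x < r * (e - 1) by rewrite mulrC -ltr_pdivrMr.
  have E : (\int[mu]_(y in `[x, +oo[) (fln (y / r))%:E = \int[mu]_(y in `[x, (r * (e - 1))%R]) (gl r y)%:E)%E.
    rewrite integral_mkcond [RHS]integral_mkcond; apply: eq_integral => y _; rewrite !patchE.
    rewrite !memi !in_itv /= andbT.
    have [xy|] := leP x y; last by [].
    have [yM|My] := leP y (r * (e - 1)).
    + by rewrite /gl /fln ler_pdivrMr // mulrC yM.
    + by rewrite /fln ler_pdivrMr // mulrC leNgt My.
  rewrite /Rintegral E int_gl // /Gf /= (ltW xM).
  have -> : r * (e - 1) / r = e - 1 by field.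
  rewrite ln_e1 mulr0 sub0r.
  by field.
- have zero y : x <= y -> (if y / r <= e - 1 then ln (e - y / r) else 0) = 0.
    move=> xy; case: ifP => // yM.
    have : x / r <= y / r by rewrite ler_pM2r // invr_gt0.
    move=> h; have -> : y / r = e - 1.
      by apply/eqP; rewrite eq_le yM (le_trans Mx h).
    exact: ln_e1.
  rewrite zero // mulr0 add0r /Rintegral integral0_eq /=; last first.
    by move=> y; rewrite /= in_itv /= andbT => /zero ->.
  case: ifP => xM; last by rewrite mulr0.
  have -> : x / r = e - 1 by apply/eqP; rewrite eq_le xM Mx.
  by rewrite ln_e1; field.
Qed.

Lemma e2 : 2 <= e.
Proof. by have := expR_ge1Dx (1:R); rewrite (_ : 1 + 1 = 2). Qed.

Lemma e_pos : 0 < e. Proof. exact: expR_gt0. Qed.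

Lemma lne : ln e = 1.
Proof. exact: expRK. Qed.

Lemma lnL (w : R) : 0 < w -> 1 - w^-1 <= ln w.
Proof.
move=> w0.
have wi : 0 < w^-1 by rewrite invr_gt0.
have := @le_ln1Dx R (w^-1 - 1) ltac:(lra).
have -> : 1 + (w^-1 - 1) = w^-1 by ring.
rewrite lnV ?posrE //; lra.
Qed.
Arguments lnL {w}.

Lemma q0 : q 0 = 1.
Proof.
have := e2; rewrite /q subr0 lne => h.
have -> : 0 <= e - 1 by lra.
by ring.
Qed.

Lemma q_ge0 (s : R) : 0 <= s -> 0 <= q s.
Proof.
move=> s0; rewrite /q; case: ifP => // sM.
set w := e - s.
have w1 : 1 <= w by rewrite /w; lra.
have w0 : 0 < w by lra.
have we : w <= e by rewrite /w; lra.
have := lnL w0; set v := w^-1 => hl.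
have vw : v * w = 1 by rewrite /v mulVf // gt_eqF.
have v0 : 0 <= v by rewrite /v invr_ge0 ltW.
have sw : s = e - w by rewrite /w; ring.
clearbody v w.
have h1 : e * (1 - v) - (w - 1) = v * (w - 1) * (e - w).
  have -> : v * (w - 1) * (e - w) = (v * w) * e - (v * w) * w - v * e + v * w by ring.
  rewrite vw; ring.
have h2 : 0 <= v * (w - 1) * (e - w) by rewrite !mulr_ge0 // ?subr_ge0.
have h3 : e * (1 - v) <= e * ln w by rewrite ler_pM2l // e_pos.
have -> : e * ln w - e + s + 1 = e * ln w - (w - 1) by rewrite sw; ring.
lra.
Qed.
Arguments q_ge0 {s}.

Lemma q_lip (s : R) : 0 <= s -> 1 - q s <= (e - 1) * s.
Proof.
move=> s0; have := e2 => he; rewrite /q; case: ifP => sM; last first.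
  have : e - 1 < s by rewrite ltNge sM.
  move=> h; rewrite subr0; nra.
set w := e - s.
have w1 : 1 <= w by rewrite /w; lra.
have w0 : 0 < w by lra.
have we : w <= e by rewrite /w; lra.
have := lnL (_ : 0 < w / e).
rewrite ln_div ?posrE ?e_pos // lne invf_div.
have ew : e / w <= 1 + s.
  rewrite ler_pdivrMr // /w; nra.
move=> /(_ ltac:(by rewrite divr_gt0 // e_pos)) hl.
have : 1 - ln w <= s by lra.
have -> : 1 - (e * ln w - e + s + 1) = e * (1 - ln w) - s by ring.
move=> h; have : e * (1 - ln w) <= e * s by rewrite ler_pM2l // e_pos.
lra.
Qed.
Arguments q_lip {s}.

Lemma main_ineq (s a : R) : 0 <= s -> 0 <= a <= 1 ->
  (1 - e^-1) * (a * (1 - s / (e - 1)) + q s / (e - 1)) <= fln s.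
Proof.
move=> s0 /andP[a0 a1]; have := e2 => he.
have e10 : 0 < e - 1 by lra.
have k0 : 0 <= 1 - e^-1.
  rewrite subr_ge0 invf_le1 //; lra.
rewrite /q /fln; case: ifP => sM.
- have hs : s / (e - 1) <= 1 by rewrite ler_pdivrMr //; lra.
  have hsa : a * (1 - s / (e - 1)) <= 1 - s / (e - 1).
    have : 0 <= 1 - s / (e - 1) by lra.
    nra.
  apply: le_trans (_ : (1 - e^-1) * ((1 - s / (e - 1)) + (e * ln (e - s) - e + s + 1) / (e - 1)) <= _).
    by rewrite ler_wpM2l // lerD2r.
  rewrite le_eqVlt; apply/orP; left; apply/eqP.
  have en0 : e != 0 by rewrite gt_eqF // e_pos.
  have e1n0 : e - 1 != 0 by rewrite gt_eqF.
  by field; rewrite e1n0 en0.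
- have hs : 1 < s / (e - 1) by rewrite ltr_pdivlMr // mul1r ltNge sM.
  rewrite mul0r addr0.
  have : a * (1 - s / (e - 1)) <= 0 by nra.
  nra.
Qed.
Arguments main_ineq {s a}.

Lemma fln_ge0 (s : R) : 0 <= s -> 0 <= fln s.
Proof.
move=> s0; have := e2 => he; rewrite /fln; case: ifP => // sM.
apply: ln_ge0; lra.
Qed.

Lemma fln_le1 (s : R) : 0 <= s -> fln s <= 1.
Proof.
move=> s0; have := e2 => he; rewrite /fln; case: ifP => // sM.
rewrite -[X in _ <= X]lne ler_ln ?posrE ?e_pos //; lra.
Qed.

Lemma fln0 : fln 0 = 1 :> R.
Proof.
have := e2 => he; rewrite /fln subr0 lne.
by have -> : (0:R) <= e - 1 by lra.
Qed.

Lemma fln_anti (x y : R) : 0 <= x -> x <= y -> fln y <= fln x.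
Proof.
move=> x0 xy; have := e2 => he.
rewrite {1}/fln; case: ifP => yM; last exact: fln_ge0.
rewrite /fln (le_trans xy yM).
rewrite ler_ln ?posrE; lra.
Qed.

Lemma Pir_eq (ui r x : R) : 0 < ui -> 0 < r -> 0 <= x ->
  Pir fln ui r x = ui * (r * q (x / ui / r)).
Proof. by move=> u0 r0 x0; rewrite /Pir Qr_fln // divr_ge0 // ltW. Qed.

Definition kap : R := 1 - e^-1.

Lemma kap_ge0 : 0 <= kap.
Proof. have := e2 => he; rewrite /kap subr_ge0 invf_le1 ?e_pos //; lra. Qed.

Lemma kap_le1 : kap <= 1.
Proof. have := e2 => he; rewrite /kap; have : 0 <= e^-1 by rewrite invr_ge0 ltW ?e_pos. lra. Qed.

Lemma EF_bound (S : finType) (u c a : S -> R) (rho : R) : 0 < rho ->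
  (forall i, 0 < u i) -> (forall i, 0 <= c i) -> (forall i, 0 <= a i <= 1) ->
  \sum_i c i * a i <= envy_sum fln u c rho ->
  kap * \sum_i u i * a i <= \sum_i u i * fln (c i / u i / rho).
Proof.
move=> r0 u0 c0 a01 hB; have := e2 => he.
have e1n0 : e - 1 != 0 by rewrite gt_eqF //; lra.
have rn0 : rho != 0 by rewrite gt_eqF.
set K := kap / (rho * (e - 1)).
have K0 : 0 <= K by rewrite /K divr_ge0 ?kap_ge0 // mulr_ge0 ?ltW //; lra.
have term i : kap * (u i * a i) - K * (c i * a i - Pir fln (u i) rho (c i))
    <= u i * fln (c i / u i / rho).
  have s0 : 0 <= c i / u i / rho by rewrite !divr_ge0 // ltW.
  have := main_ineq s0 (a01 i) => h.
  have := ler_wpM2l (ltW (u0 i)) h.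
  apply: le_trans; rewrite le_eqVlt; apply/orP; left; apply/eqP.
  rewrite Pir_eq //.
  have un0 : u i != 0 by rewrite gt_eqF.
  rewrite /K /kap.
  move: (q _) => Q.
  have en0 : e != 0 by rewrite gt_eqF // e_pos.
  by field; rewrite e1n0 rn0 un0 en0.
apply: le_trans (ler_sum _ (fun i _ => term i)).
rewrite sumrB -mulr_sumr -mulr_sumr sumrB.
have : \sum_i c i * a i - \sum_i Pir fln (u i) rho (c i) <= 0.
  by rewrite subr_le0.
move=> h; have : K * (\sum_i c i * a i - \sum_i Pir fln (u i) rho (c i)) <= 0.
  by rewrite mulr_ge0_le0.
lra.
Qed.

Definition czero (S : finType) (c : S -> R) (i : S) : S -> R :=
  fun j => if j == i then 0 else c j.

Lemma diff_bound (S : finType) (u c : S -> R) (rho : R) (i : S) : 0 < rho ->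
  (forall i, 0 < u i) -> (forall i, 0 <= c i) ->
  envy_sum fln u (czero S c i) rho <= envy_sum fln u c rho + (e - 1) * c i.
Proof.
move=> r0 u0 c0.
rewrite /envy_sum (bigD1 i) //= [X in _ <= X + _](bigD1 i) //= /czero eqxx.
have -> : \sum_(j | j != i) Pir fln (u j) rho (if j == i then 0 else c j)
        = \sum_(j | j != i) Pir fln (u j) rho (c j).
  by apply: eq_bigr => j /negbTE ->.
rewrite !Pir_eq // mul0r mul0r q0 mulr1.
have s0 : 0 <= c i / u i / rho by rewrite !divr_ge0 // ltW.
have := q_lip s0 => h.
have ur : 0 <= u i * rho by rewrite mulr_ge0 // ltW.
have := ler_wpM2l ur h.
have un0 : u i != 0 by rewrite gt_eqF.
have rn0 : rho != 0 by rewrite gt_eqF.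
have -> : u i * rho * ((e - 1) * (c i / u i / rho)) = (e - 1) * c i by field; rewrite un0 rn0.
move: (q _) => Q h2.
have : u i * rho * (1 - Q) = u i * rho - u i * (rho * Q) by ring.
move: (\sum_(j | j != i) Pir fln (u j) rho (c j)) => Sm.
lra.
Qed.

Lemma sum_lb (S : finType) (u c : S -> R) (rho : R) (i : S) : 0 < rho ->
  (forall i, 0 < u i) -> (forall i, 0 <= c i) ->
  u i * rho <= envy_sum fln u (czero S c i) rho.
Proof.
move=> r0 u0 c0.
rewrite /envy_sum (bigD1 i) //= /czero eqxx Pir_eq // mul0r mul0r q0 mulr1.
rewrite lerDl; apply: sumr_ge0 => j _.
have cj : 0 <= (if j == i then 0 else c j) by case: ifP.
rewrite Pir_eq //; apply: mulr_ge0; first exact: ltW.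
apply: mulr_ge0; first exact: ltW.
by apply: q_ge0; rewrite !divr_ge0 // ltW.
Qed.

Definition tset (S : finType) (B : R) (u c : S -> R) (i : S) :=
  [set r : R | 0 < r /\ envy_sum fln u (czero S c i) r = B].
Arguments tset {S}.

Lemma rate_cases (S : finType) (B : R) (u c : S -> R) (i : S) :
  0 < B -> (forall i, 0 < u i) -> (forall i, 0 <= c i) ->
  ((forall r, ~ tset B u c i r) /\ truthful_rate fln B u c i = 0) \/
  ((exists r, tset B u c i r) /\ (forall r, tset B u c i r -> r <= truthful_rate fln B u c i)).
Proof.
move=> B0 u0 c0.
have -> : truthful_rate fln B u c i = sup (tset B u c i) by [].
case: (pselect (exists r, tset B u c i r)) => [ex|N]; [right|left].
  split => //; apply: ub_le_sup.
  exists (B / u i) => r [r0 hr].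
  have := @sum_lb S u c r i r0 u0 c0; rewrite hr => h.
  by rewrite ler_pdivlMr // mulrC.
split; first by move=> r Tr; apply: N; exists r.
have -> : tset B u c i = set0 by apply/seteqP; split => r // Tr; apply: N; exists r.
exact: sup0.
Qed.

Lemma rate_ge0 (S : finType) (B : R) (u c : S -> R) (i : S) :
  0 < B -> (forall i, 0 < u i) -> (forall i, 0 <= c i) ->
  0 <= truthful_rate fln B u c i.
Proof.
move=> B0 u0 c0; case: (@rate_cases S B u c i B0 u0 c0) => [[_ ->]|[[r Tr] H]] //.
by apply: le_trans (H r Tr); case: Tr => /ltW.
Qed.

Lemma kap_gt0 : 0 < kap.
Proof. have := e2 => he; rewrite /kap subr_gt0 invf_lt1 ?e_pos //; lra. Qed.

Lemma core (S : finType) (B : R) (u c a : S -> R) (lam : R) :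
  0 < B -> (forall i, 0 < u i) -> (forall i, 0 <= c i) ->
  0 <= lam <= 1 -> (forall i, (e - 1) * c i <= (1 - lam) * B) ->
  (forall i, 0 <= a i <= 1) -> \sum_i c i * a i <= B ->
  kap * lam * \sum_i u i * a i <= truthful_utility fln B u c.
Proof.
move=> B0 u0 c0 /andP[lam0 lam1] cB a01 ac.
have ua0 : 0 <= \sum_i u i * a i.
  by apply: sumr_ge0 => i _; apply: mulr_ge0; [exact: ltW|case/andP: (a01 i)].
case: (pselect (exists i, exists r, tset B u c i r)) => [[i0 [r0 T0]] | N].
- pose P := fun i => `[< exists r, tset B u c i r >].
  have Pi0 : P i0 by apply/asboolP; exists r0.
  case: (arg_minP (fun i => truthful_rate fln B u c i) Pi0) => ist /asboolP [rho Trho] Hmin.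
  have [rho0 hrho] := Trho.
  have rho_le : rho <= truthful_rate fln B u c ist.
    case: (@rate_cases S B u c ist B0 u0 c0) => [[N _]|[_ H]]; last exact: H.
    by exfalso; apply: (N rho).
  have spend : \sum_i c i * (lam * a i) <= envy_sum fln u c rho.
    have := @diff_bound S u c rho ist rho0 u0 c0; rewrite hrho => h.
    have := cB ist => h2.
    have : \sum_i c i * (lam * a i) = lam * \sum_i c i * a i.
      by rewrite mulr_sumr; apply: eq_bigr => j _; ring.
    move=> ->.
    have : lam * \sum_i c i * a i <= lam * B by rewrite ler_wpM2l.
    lra.
  have a01' i : 0 <= lam * a i <= 1.
    have /andP[h1 h2] := a01 i; apply/andP; split; first exact: mulr_ge0.
    nra.
  have := @EF_bound S u c _ rho rho0 u0 c0 a01' spend => hEF.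
  have -> : kap * lam * \sum_i u i * a i = kap * \sum_i u i * (lam * a i).
    rewrite -mulrA; congr (_ * _); rewrite mulr_sumr; apply: eq_bigr => j _; ring.
  apply: (le_trans hEF); rewrite /truthful_utility /fr.
  apply: ler_sum => j _; apply: ler_wpM2l; first exact: ltW.
  have s0 : 0 <= c j / u j by rewrite divr_ge0 // ltW.
  case: (@rate_cases S B u c j B0 u0 c0) => [[_ ->]|[[r Tr] _]].
    by rewrite invr0 mulr0 fln0 fln_le1 // divr_ge0 // ltW.
  have Pj : P j by apply/asboolP; exists r.
  have hj := Hmin j Pj.
  have rj : rho <= truthful_rate fln B u c j by apply: le_trans rho_le hj.
  have rj0 : 0 < truthful_rate fln B u c j by apply: lt_le_trans rj.
  apply: fln_anti; first by rewrite divr_ge0 // ltW.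
  by apply: ler_wpM2l => //; rewrite lef_pV2 ?posrE.
- have r0 j : truthful_rate fln B u c j = 0.
    case: (@rate_cases S B u c j B0 u0 c0) => [[_ ->]|[[r Tr] _]] //.
    by exfalso; apply: N; exists j, r.
  rewrite /truthful_utility /fr.
  rewrite [X in _ <= X](eq_bigr (fun i => u i)); last by move=> i _ /=; rewrite r0 invr0 mulr0 fln0 mulr1.
  have kl : kap * lam <= 1.
    have := kap_le1; have := kap_ge0 => k0 k1; nra.
  have kl0 : 0 <= kap * lam by rewrite mulr_ge0 // kap_ge0.
  apply: le_trans (_ : \sum_i u i * a i <= _).
    nra.
  apply: ler_sum => i _; have /andP[_ h] := a01 i; have := u0 i; nra.
Qed.

Lemma lim_part : (fun x : R => kap * (1 - (e - 1) * x)) x @[x --> 0^'+] --> 1 - e^-1.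
Proof.
pose g := fun x : R => kap * (1 - (e - 1) * x).
have dg : is_derive (0:R) 1 g (- (kap * (e - 1))).
  have H1 := @is_deriveZ R R R id (kap * (e - 1)) 0 1 1 (is_derive_id _ _).
  have H := @is_deriveB R R R (cst kap) ((kap * (e - 1)) \*: id) 0 1 0 _ (is_derive_cst _ _ _) H1.
  eapply is_derive_ext2; [exact: H| move=> z /=| ].
  - change (kap - (kap * (e - 1)) * z = kap * (1 - (e - 1) * z)); ring.
  - by rewrite /GRing.scale /= mulr1 sub0r.
have hc : {for 0, continuous g}.
  have [dg0 _] := dg.
  by apply/differentiable_continuous; rewrite -derivable1_diffP.
have -> : 1 - e^-1 = g 0 by rewrite /g mulr0 subr0 mulr1.
exact: cvg_at_right_filter.
Qed.

Lemma main_R : exists rho : R -> R,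
    (rho x @[x --> 0^'+] --> 1 - (expR 1)^-1) /\
    forall (S : finType) (B : R) (u c : S -> R),
      0 < B -> (forall i, 0 < u i) -> (forall i, 0 <= c i) ->
      rho (cmax c / B) * Ustar B u c <= truthful_utility fln B u c.
Proof.
exists (fun x : R => kap * (1 - (e - 1) * x)); split; first exact: lim_part.
move=> S B u c B0 u0 c0 /=.
have he := e2.
have Bn0 : B != 0 by rewrite gt_eqF.
have cmax0 : 0 <= cmax c.
  rewrite /cmax; elim/big_ind: _ => //.
  by move=> x y hx hy; rewrite le_max hx.
have cmaxE i : c i <= cmax c by rewrite /cmax; exact: le_bigmax.
set lam := 1 - (e - 1) * (cmax c / B).
have lam1 : lam <= 1.
  have : 0 <= (e - 1) * (cmax c / B) by rewrite mulr_ge0 ?divr_ge0 // ?ltW //; lra.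
  rewrite /lam; lra.
have cB i : (e - 1) * c i <= (1 - lam) * B.
  have -> : (1 - lam) * B = (e - 1) * cmax c by rewrite /lam; field.
  by rewrite ler_wpM2l ?cmaxE //; lra.
set A := [set x : R | exists a : S -> R,
         (forall i, 0 <= a i <= 1) /\ \sum_(i : S) c i * a i <= B /\
         x = \sum_(i : S) u i * a i].
have hub : has_ubound A.
  exists (\sum_i u i) => x [a [a01 [_ ->]]].
  apply: ler_sum => i _; have /andP[_ h] := a01 i; have := u0 i; nra.
have A0 : A 0.
  exists (fun _ => 0); split; first by move=> i; rewrite lexx ler01.
  split; first by rewrite big1 ?ltW // => i _; rewrite mulr0.
  by rewrite big1 // => i _; rewrite mulr0.
have U0 : 0 <= Ustar B u c by apply: ub_le_sup hub _ A0.
have util0 : 0 <= truthful_utility fln B u c.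
  apply: sumr_ge0 => i _; apply: mulr_ge0; first exact: ltW.
  apply: fln_ge0; apply: divr_ge0; first by apply: divr_ge0; [exact: c0 | exact: ltW].
  exact: (@rate_ge0 S B u c i B0 u0 c0).
rewrite -/lam.
have [lam0|lam0] := leP lam 0.
  apply: le_trans util0.
  apply: mulr_le0_ge0 => //; apply: mulr_ge0_le0 => //; exact: kap_ge0.
have kl0 : 0 < kap * lam by rewrite mulr_gt0 // kap_gt0.
have Ule : Ustar B u c <= truthful_utility fln B u c / (kap * lam).
  apply: ge_sup; first by exists 0.
  move=> x [a [a01 [ac ->]]].
  rewrite ler_pdivlMr // mulrC.
  apply: core => //; first by rewrite ltW.
have := ler_wpM2l (ltW kl0) Ule.
have E : kap * lam * (truthful_utility fln B u c / (kap * lam)) = truthful_utility fln B u c.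
  by rewrite mulrC divfK // gt_eqF.
by rewrite E.
Qed.

End S.

Theorem lemma11 (R : realType) :
  exists rho : R -> R,
    (rho x @[x --> 0^'+] --> 1 - (expR 1)^-1) /\
    forall (S : finType) (B : R) (u c : S -> R),
      0 < B -> (forall i, 0 < u i) -> (forall i, 0 <= c i) ->
      rho (cmax c / B) * Ustar B u c <= truthful_utility fln B u c.
Proof. exact: main_R. Qed.
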